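(* Let $\Sigma$ be the integral $\mathbb Q$-affine polyhedral complex in $\mathbb R^{V_f''\cup V'_\infty}$ described below, with recession fan $\Upsilon$. There exists an integral $\mathbb Q$-affine polyhedral complex $\widehat\Sigma$ with support $\mathbb R^{V_f''\cup V'_\infty}$ containing $\Sigma$ as a subcomplex, whose recession fan $\widehat\Upsilon$ is a complete fan in $\mathbb R^{V_f''\cup V'_\infty}$ containing $\Upsilon$; moreover $\widehat\Sigma$ can be chosen convex, with convex recession fan $\widehat\Upsilon$.
   Context: $\Sigma$ is a finite integral $\mathbb Q$-affine polyhedral complex in $\mathbb R^{V_f''\cup V'_\infty}$ ($V_f''$, $V'_\infty$ finite sets) which is a subcomplex of a product $P\times\mathbb R^{V'_\infty}_{\ge0}$, where $P$ is the simplex in $\mathbb R^{V_f''}$ with vertices $\frac1{n_{\mathfrak p}}e_{\mathfrak p}$, $\mathfrak p\in V_f''$, $n_{\mathfrak p}$ positive integers, and whose cells are of the form (convex hull of some of these vertices) $+$ (cone spanned by vectors $e_{S_1},\dots,e_{S_l}$ for a chain $S_1\subsetneq\cdots\subsetneq S_l$ of nonempty subsets of $V'_\infty$, $e_S$ the indicator vector of $S$). An integral $\mathbb Q$-affine polyhedral complex is a finite collection of polyhedra defined by integral $\mathbb Q$-affine inequalities $\langle m,u\rangle+\gamma\ge0$ ($m$ integral, $\gamma\in\mathbb Q$), closed under faces and intersecting in common faces. The recession fan is the collection of recession cones of the cells. A facewise (integral $\mathbb Q$-)affine function $H$ on a complex $\Sigma$ is convex if for each cell $\sigma$ there is an (integral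 $\mathbb Q$-)affine $L_\sigma$ on the ambient space with $H=L_\sigma$ on $\sigma$ and $H-L_\sigma\ge0$ on $\eta\setminus\sigma$ for every cell $\eta\supseteq\sigma$, strictly convex if these inequalities are strict. A complex (or fan) is convex if it admits a strictly convex facewise integral $\mathbb Q$-affine function (having the same slopes near infinity along parallel rays). *)

(* Defs.v *)
From HB Require Import structures.
From mathcomp Require Import all_boot all_order all_algebra.
From mathcomp Require Import boolp classical_sets cardinality reals.
Set Implicit Arguments. Unset Strict Implicit. Unset Printing Implicit Defensive.
Import Order.TTheory GRing.Theory Num.Theory.
Local Open Scope ring_scope.
Local Open Scope classical_set_scope.

Section Polyhedral.
Variables (R : realType) (V : finType).
Local Notation pt := (V -> R).

Definition iqaff (m : V -> int) (g : rat) (u : pt) : R :=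
  \sum_(i : V) (m i)%:~R * u i + ratr g.

Definition iq_poly (P : set pt) : Prop :=
  exists (k : nat) (M : 'I_k -> V -> int) (g : 'I_k -> rat),
    P = [set u | forall j, 0 <= iqaff (M j) (g j) u].

Definition iq_cone (C : set pt) : Prop :=
  exists (k : nat) (M : 'I_k -> V -> int),
    C = [set u | forall j, 0 <= iqaff (M j) 0 u].

(* F is a face of P (possibly empty, possibly P itself) *)
Definition is_face (F P : set pt) : Prop :=
  exists (c : V -> R) (d : R),
    (forall u, P u -> 0 <= \sum_(i : V) c i * u i + d) /\
    F = P `&` [set u | \sum_(i : V) c i * u i + d = 0].

Definition iq_complex (S : set (set pt)) : Prop :=
  [/\ finite_set S,
      (forall s, S s -> iq_poly s /\ s !=set0),
      (forall s F, S s -> is_face F s -> F !=set0 -> S F) &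
      (forall s t, S s -> S t -> is_face (s `&` t) s /\ is_face (s `&` t) t)].

Definition iq_fan (S : set (set pt)) : Prop :=
  iq_complex S /\ (forall s, S s -> iq_cone s).

Definition covers (S : set (set pt)) : Prop :=
  forall u : pt, exists s, S s /\ s u.

Definition shift (x : pt) (t : R) (d : pt) : pt := fun i => x i + t * d i.

Definition rec_cone (s : set pt) : set pt :=
  [set d | forall x t, s x -> 0 <= t -> s (shift x t d)].

Definition rec_fan (S : set (set pt)) : set (set pt) := rec_cone @` S.

Definition same_slopes (S : set (set pt)) (H : pt -> R) : Prop :=
  forall s t x y d (r : R), S s -> S t -> s x -> t y ->
    rec_cone s d -> rec_cone t d -> 0 <= r ->
    H (shift x r d) - H x = H (shift y r d) - H y.

(* convex complex / fan: admits a strictly convex facewise integral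
   Q-affine function with the same slopes along parallel rays *)
Definition convex_complex (S : set (set pt)) : Prop :=
  exists H : pt -> R, same_slopes S H /\
    forall s, S s -> exists (m : V -> int) (g : rat),
      (forall x, s x -> H x = iqaff m g x) /\
      (forall e, S e -> s `<=` e -> forall x, e x -> ~ s x -> iqaff m g x < H x).

End Polyhedral.

Section SigmaCells.
Variables (R : realType) (Vf Vinf : finType).

Definition is_chain (c : seq {set Vinf}) : bool :=
  sorted (fun S1 S2 : {set Vinf} => S1 \proper S2) c && all (fun S => S != @finset.set0 Vinf) c.

(* conv{ (1/n_p) e_p : p in A } + cone{ e_{S_j} } *)
Definition sigma_cell (n : Vf -> nat) (A : {set Vf}) (c : seq {set Vinf})
  : set (Vf + Vinf -> R) :=
  [set u | exists (lam : Vf -> R) (mu : 'I_(size c) -> R),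
     [/\ (forall p, 0 <= lam p), (forall p, p \notin A -> lam p = 0),
         \sum_(p : Vf) lam p = 1 /\ (forall j, 0 <= mu j),
         (forall p, u (inl p) = lam p / (n p)%:R) &
         (forall i, u (inr i) =
            \sum_(j < size c) mu j * (i \in nth (@finset.set0 Vinf) c j)%:R)]].

End SigmaCells.

(* Main.v *)
Require Import Defs.
From HB Require Import structures.
From mathcomp Require Import all_boot all_order all_algebra.
From mathcomp Require Import boolp classical_sets cardinality reals.
From mathcomp Require Import ring lra.
Set Implicit Arguments. Unset Strict Implicit. Unset Printing Implicit Defensive.
Import Order.TTheory GRing.Theory Num.Theory.
Local Open Scope ring_scope.
Local Open Scope classical_set_scope.

Section Aff.
Variables (R : realType) (V : finType).
Local Notation pt := (V -> R).

Definition aff (c : V -> R) (d : R) (u : pt) : R := \sum_(i : V) c i * u i + d.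

Lemma iqaffE (m : V -> int) (g : rat) u :
  iqaff m g u = aff (fun v => (m v)%:~R) (ratr g) u.
Proof. by []. Qed.

Lemma aff_comb2 c d (al be : R) (x y : pt) : al + be = 1 ->
  aff c d (fun v => al * x v + be * y v) = al * aff c d x + be * aff c d y.
Proof.
move=> h; rewrite /aff.
have -> : \sum_i c i * (al * x i + be * y i) =
   al * (\sum_i c i * x i) + be * (\sum_i c i * y i).
  rewrite !mulr_sumr -big_split /=; apply: eq_bigr => i _; ring.
by rewrite -[d in LHS]mul1r -h; ring.
Qed.

Lemma aff_shift c d (x : pt) t (e : pt) :
  aff c d (shift x t e) = aff c d x + t * aff c 0 e.
Proof.
rewrite /aff /shift addr0 mulr_sumr.
have -> : \sum_i c i * (x i + t * e i) = \sum_i c i * x i + \sum_i t * (c i * e i).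
  rewrite -big_split /=; apply: eq_bigr => i _; ring.
ring.
Qed.

Lemma aff_avg (K : finType) c d (pts : K -> pt) : (0 < #|K|)%N ->
  aff c d (fun v => (#|K|%:R)^-1 * \sum_k pts k v) =
  (#|K|%:R)^-1 * \sum_k aff c d (pts k).
Proof.
move=> hK; rewrite /aff big_split /= mulrDr.
have hN : (#|K|%:R : R) != 0 by rewrite pnatr_eq0 -lt0n.
congr (_ + _).
  have -> : \sum_k \sum_v c v * pts k v = \sum_v \sum_k c v * pts k v.
    exact: exchange_big.
  rewrite mulr_sumr; apply: eq_bigr => v _; rewrite -mulr_sumr; ring.
rewrite sumr_const -mulr_natr; field; exact: hN.
Qed.

End Aff.
Definition sv {R : realType} (o : option bool) : R :=
  match o with Some true => 1 | Some false => -1 | None => 0 end.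

Definition cz (o : option bool) (b : bool) : int :=
  if b then (match o with Some false => -1 | _ => 1 end)
  else (if o is None then -1 else 0).

Section Signs.
Variable R : realType.

Lemma sv_le (o : option bool) (r : R) : sv o * r <= `|r|.
Proof.
case: o => [[]|] /=; rewrite ?mul1r ?mulN1r ?mul0r ?ler_norm ?normr_ge0 //.
by rewrite -normrN ler_norm.
Qed.

Lemma sv_eq0 (o : option bool) (r : R) : r = 0 -> sv o * r = `|r|.
Proof. by move->; rewrite mulr0 normr0. Qed.

Lemma sv_abs (o : option bool) (r : R) : o != None -> 0 <= sv o * r -> sv o * r = `|r|.
Proof.
case: o => [[]|] //= _; rewrite ?mul1r ?mulN1r => h.
  by rewrite ger0_norm.
by rewrite ler0_norm // -oppr_ge0.
Qed.

Lemma sv_None (r : R) : sv None * r = `|r| -> r = 0.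
Proof. by rewrite /= mul0r => /esym/normr0_eq0. Qed.

Lemma sv_ge0 (o : option bool) (r : R) : sv o * r = `|r| -> 0 <= sv o * r.
Proof. by move->. Qed.

Lemma sv_nz (o : option bool) (r : R) : sv o * r = `|r| -> r != 0 -> o != None.
Proof. by case: o => // /sv_None ->; rewrite eqxx. Qed.

Lemma sv_cz (o : option bool) (r : R) :
  sv o * r = `|r| <-> (forall b, 0 <= (cz o b)%:~R * r).
Proof.
case: o => [[]|] /=; rewrite ?mul1r ?mulN1r ?mul0r.
- split=> [h [] /=|h]; rewrite ?mul1r ?mul0r //; first by rewrite h.
  by rewrite ger0_norm // -[r]mul1r (h true).
- split=> [h [] /=|h]; rewrite ?mulN1r ?mul0r //; first by rewrite h.
  by rewrite ler0_norm // -oppr_ge0 -mulN1r (h true).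
- split=> [h [] /=|h]; rewrite ?mul1r ?mulN1r //.
  + by move/esym/normr0_eq0: h ->.
  + by move/esym/normr0_eq0: h ->; rewrite oppr0.
  apply/esym/eqP; rewrite normr_eq0 eq_le.
  by have := h false; have := h true; rewrite mul1r mulN1r oppr_ge0 => -> ->.
Qed.

Lemma sv_shift (o : option bool) (x e t : R) : 0 <= t ->
  sv o * x = `|x| -> sv o * e = `|e| -> sv o * (x + t * e) = `|x + t * e|.
Proof.
move=> t0 hx he; apply/eqP; rewrite eq_le sv_le /= mulrDr hx mulrCA he.
by rewrite (le_trans (ler_normD _ _)) // normrM (ger0_norm t0).
Qed.

End Signs.
Section Arr.
Variables (R : realType) (V I : finType) (lam : I -> V -> int) (a : I -> rat).
Local Notation pt := (V -> R).

Definition ellA i (u : pt) : R := iqaff (lam i) (a i) u.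
Definition cellA (s : I -> option bool) : set pt :=
  [set u | forall i, sv (s i) * ellA i u = `|ellA i u|].
Definition ShA : set (set pt) := [set C | exists s, C = cellA s /\ C !=set0].

Lemma iqaff_scale (z : int) (m : V -> int) g (u : pt) :
  iqaff (fun v => z * m v) (z%:~R * g) u = z%:~R * iqaff m g u.
Proof.
rewrite /iqaff mulrDr mulr_sumr; congr (_ + _).
  by apply: eq_bigr => v _; rewrite intrM mulrA.
by rewrite rmorphM /= ratr_int.
Qed.

Definition rowM (s : I -> option bool) (j : 'I_#|{: I * bool}|) : V -> int :=
  fun v => cz (s (enum_val j).1) (enum_val j).2 * lam (enum_val j).1 v.
Definition rowG (s : I -> option bool) (j : 'I_#|{: I * bool}|) : rat :=
  (cz (s (enum_val j).1) (enum_val j).2)%:~R * a (enum_val j).1.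

Lemma cellA_rows s :
  cellA s = [set u | forall j, 0 <= iqaff (rowM s j) (rowG s j) u].
Proof.
apply/seteqP; split=> u /= h.
  move=> j; rewrite iqaff_scale; exact/(sv_cz _ _).1.
move=> i; apply/(sv_cz _ _).2 => b.
have := h (enum_rank (i, b)); by rewrite iqaff_scale /rowM /rowG enum_rankK.
Qed.

Lemma cellA_poly s : iq_poly (cellA s).
Proof. by exists #|{: I * bool}|, (rowM s), (rowG s); rewrite cellA_rows. Qed.

End Arr.
Section Arr2.
Variables (R : realType) (V I : finType) (lam : I -> V -> int) (a : I -> rat).
Local Notation pt := (V -> R).
Local Notation ell := (@ellA R V I lam a).
Local Notation cellA := (@cellA R V I lam a).

Lemma aff_lincomb (w : I -> R) : exists (c : V -> R) (d : R),
  forall u : pt, \sum_(v : V) c v * u v + d = \sum_i w i * ell i u.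
Proof.
exists (fun v => \sum_i w i * (lam i v)%:~R), (\sum_i w i * ratr (a i)) => u.
rewrite /ellA /iqaff.
under [RHS]eq_bigr => i _ do rewrite mulrDr mulr_sumr.
rewrite big_split /=; congr (_ + _).
rewrite exchange_big /=; apply: eq_bigr => v _; rewrite mulr_suml.
by apply: eq_bigr => i _; rewrite mulrA.
Qed.

Lemma sv_uniq (o o' : option bool) (r : R) :
  sv o * r = `|r| -> sv o' * r = `|r| -> r != 0 -> o = o'.
Proof.
move=> h h' nz.
have hn := sv_nz h nz; have hn' := sv_nz h' nz.
case: o o' h h' hn hn' => [[]|] [[]|] //= h h' _ _; exfalso; move: nz; rewrite ?mul1r ?mulN1r in h h'.
  by move/negP; apply; apply/eqP; lra.
by move/negP; apply; apply/eqP; lra.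
Qed.

Lemma inter_face s t : is_face (cellA s `&` cellA t) (cellA s).
Proof.
pose w i : R := if s i != t i then sv (s i) else 0.
have [c [d hcd]] := aff_lincomb w.
have term0 : forall u i, cellA s u -> 0 <= w i * ell i u.
  by move=> u i hu; rewrite /w; case: ifP => _; [rewrite hu|rewrite mul0r].
exists c, d; split.
  by move=> u hu; rewrite hcd; apply: sumr_ge0 => i _; exact: term0.
apply/seteqP; split=> u /=.
  move=> [hs ht]; split=> //; rewrite hcd; apply: big1 => i _.
  rewrite /w; case: ifP => [/negP hne|]; last by rewrite mul0r.
  have [->|nz] := eqVneq (ell i u) 0; first by rewrite mulr0.
  by exfalso; apply: hne; apply/eqP; exact: sv_uniq (hs i) (ht i) nz.
move=> [hs]; rewrite hcd => /psumr_eq0P h0; split=> // i.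
have := h0 (fun j _ => term0 _ j hs) i isT; rewrite /w; case: ifP => [_|/negbFE/eqP <-].
  by rewrite (hs i) => /normr0_eq0 /sv_eq0.
by move=> _; exact: hs.
Qed.

Lemma inter_face2 s t : is_face (cellA s `&` cellA t) (cellA t).
Proof. by rewrite setIC; exact: inter_face. Qed.

End Arr2.
Section Arr3.
Variables (R : realType) (V I : finType) (lam : I -> V -> int) (a : I -> rat).
Local Notation pt := (V -> R).
Local Notation ell := (@ellA R V I lam a).
Local Notation cellA := (@cellA R V I lam a).

Lemma ell_avg (K : finType) i (pts : K -> pt) : (0 < #|K|)%N ->
  ell i (fun v => (#|K|%:R)^-1 * \sum_k pts k v) =
  (#|K|%:R)^-1 * \sum_k ell i (pts k).
Proof. by move=> hK; rewrite /ellA iqaffE aff_avg. Qed.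

Lemma ell_comb2 i (al be : R) (x y : pt) : al + be = 1 ->
  ell i (fun v => al * x v + be * y v) = al * ell i x + be * ell i y.
Proof. by move=> h; rewrite /ellA iqaffE aff_comb2. Qed.

Lemma relint (F : set pt) s (c : V -> R) (d : R) :
  F = cellA s `&` [set u | aff c d u = 0] -> F !=set0 ->
  exists x, F x /\ forall i, (exists y, F y /\ ell i y != 0) -> ell i x != 0.
Proof.
move=> hF [x0 Fx0].
have H : forall i, exists y, F y /\
   ((exists y, F y /\ ell i y != 0) -> ell i y != 0).
  move=> i; case: (pselect (exists y, F y /\ ell i y != 0)) => [[y hy]|hn].
    by exists y; split; [exact: hy.1 | move=> _; exact: hy.2].
  by exists x0; split=> // h; case: hn.
have [yf hy] := choice H.
pose pts (k : option I) : pt := if k is Some i then yf i else x0.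
have Fpts : forall k, F (pts k) by case=> [i|] //=; exact: (hy i).1.
have hN : (0 < #|{: option I}|)%N by rewrite card_option.
pose x : pt := fun v => (#|{: option I}|%:R)^-1 * \sum_k pts k v.
have Ninv0 : 0 <= (#|{: option I}|%:R : R)^-1 by rewrite invr_ge0 ler0n.
have e : forall i, sv (s i) * ell i x = (#|{: option I}|%:R)^-1 * \sum_k `|ell i (pts k)|.
  move=> i; rewrite ell_avg // mulrCA mulr_sumr; congr (_ * _); apply: eq_bigr => k _.
  by have := Fpts k; rewrite hF => -[/(_ i) ->].
have xs : cellA s x.
  move=> i; apply/eqP; rewrite eq_le sv_le /= e ell_avg // normrM (ger0_norm Ninv0).
  by rewrite ler_wpM2l // ler_norm_sum.
exists x; split.
  rewrite hF; split=> //=; rewrite aff_avg // big1 ?mulr0 // => k _.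
  by have := Fpts k; rewrite hF => -[].
move=> i /(hy i).2 nz.
rewrite -normr_gt0 -(xs i) e; apply: mulr_gt0; first by rewrite invr_gt0 ltr0n.
rewrite (bigD1 (Some i)) //=; apply: (lt_le_trans (y:=`|ell i (yf i)|)).
  by rewrite normr_gt0.
by rewrite lerDl sumr_ge0.
Qed.

Lemma face_cell s (F : set pt) : is_face F (cellA s) -> F !=set0 ->
  exists t, F = cellA t.
Proof.
move=> [c [d [hnn hF]]] hne.
have [x [Fx hx]] := relint hF hne.
exists (fun i => if ell i x == 0 then None else s i).
have Fsub : forall y, F y -> cellA s y by rewrite hF => y [].
have zero_all : forall i y, F y -> ell i x = 0 -> ell i y = 0.
  move=> i y Fy hx0; apply/eqP; apply: contraT => nz.
  have := hx i (ex_intro _ y (conj Fy nz)); by rewrite hx0 eqxx.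
apply/seteqP; split=> y.
  move=> Fy i /=; case: ifP => [/eqP h0|_]; first by apply: sv_eq0; exact: zero_all.
  exact: Fsub _ Fy i.
move=> hy.
have hy0 : forall i, ell i x = 0 -> ell i y = 0.
  by move=> i h0; have := hy i; rewrite /= h0 eqxx => /sv_None.
have ys : cellA s y.
  move=> i; have [h0|nz] := eqVneq (ell i x) 0; first by apply: sv_eq0; exact: hy0.
  by have := hy i; rewrite /= (negbTE nz).
rewrite hF; split=> //=.
have xs := Fsub x Fx.
have fx : aff c d x = 0 by move: Fx; rewrite hF => -[].
pose S := \sum_i `|ell i y| / `|ell i x|.
have S0 : 0 <= S by apply: sumr_ge0 => i _; rewrite divr_ge0.
pose ep := (1 + S)^-1.
have ep0 : 0 < ep by rewrite invr_gt0; lra.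
have epS : ep * S <= 1.
  rewrite /ep mulrC -ler_pdivlMr ?invr_gt0; last lra.
  by rewrite invrK; lra.
pose z : pt := fun v => (1 + ep) * x v + (- ep) * y v.
have hsum : (1 + ep) + - ep = 1 by rewrite addrK.
have zs : cellA s z.
  move=> i; rewrite /z ell_comb2 //.
  have [h0|nz] := eqVneq (ell i x) 0.
    by apply: sv_eq0; rewrite h0 hy0 // !mulr0 addr0.
  apply: sv_abs; first exact: sv_nz (xs i) nz.
  have q_le : `|ell i y| / `|ell i x| <= S.
    rewrite /S (bigD1 i) //= lerDl; apply: sumr_ge0 => j _; rewrite divr_ge0 //.
  have A0 : 0 < `|ell i x| by rewrite normr_gt0.
  have B : sv (s i) * ell i y <= (`|ell i y| / `|ell i x|) * `|ell i x|.
    by rewrite divfK ?sv_le // normr_eq0.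
  have eq1 : ep * (`|ell i y| / `|ell i x|) <= 1.
    by apply: le_trans epS; rewrite ler_wpM2l // ltW.
  have := xs i; move: B eq1 q_le A0.
  set A := `|ell i x|; set Q := _ / A; set Bv := sv (s i) * ell i y => B eq1 qle A0 hx'.
  rewrite mulrDr !mulrA [sv _ * (1 + ep)]mulrC [sv _ * - ep]mulrC -!mulrA hx' -/Bv.
  nra.
have fz : 0 <= aff c d z by exact: hnn.
have fy : 0 <= aff c d y by exact: hnn.
move: fz; rewrite /z aff_comb2 // fx mulr0 add0r => fz.
change (aff c d y = 0); nra.
Qed.

End Arr3.
Definition svz (o : option bool) : int :=
  match o with Some true => 1 | Some false => -1 | None => 0 end.

Lemma sv_svz {R : realType} o : sv o = (svz o)%:~R :> R.
Proof. by case: o => [[]|]. Qed.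

Section Arr4.
Variables (R : realType) (V I : finType) (lam : I -> V -> int) (a : I -> rat).
Local Notation pt := (V -> R).
Local Notation ell0 := (@ellA R V I lam (fun _ => 0)).
Local Notation cellA0 := (@cellA R V I lam (fun _ => 0)).
Local Notation ell := (@ellA R V I lam a).
Local Notation cellA := (@cellA R V I lam a).
Local Notation ShA := (@ShA R V I lam a).

Lemma ell_shift i (x : pt) t e : ell i (shift x t e) = ell i x + t * ell0 i e.
Proof. by rewrite /ellA !iqaffE aff_shift /= (_ : ratr 0 = 0 :> R) // (rmorph0 (@ratr R)). Qed.

Lemma rec_cellA s x : cellA s x -> rec_cone (cellA s) = cellA0 s.
Proof.
move=> xs; apply/seteqP; split=> d.
  move=> hd i; have y1 := hd x 1 xs ler01.
  have := y1 i; rewrite ell_shift mul1r.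
  case hs : (s i) => [b|].
    move=> _; apply: sv_abs; first by [].
    rewrite -hs; apply: contraT; rewrite -ltNge => hneg.
    pose t := sv (s i) * ell i x / (- (sv (s i) * ell0 i d)) + 1.
    have t0 : 0 <= t.
      by rewrite /t addr_ge0 // divr_ge0 // ?(xs i) // oppr_ge0 ltW.
    have key : sv (s i) * (ell i x + t * ell0 i d) = sv (s i) * ell0 i d.
      have nz : sv (s i) * ell0 i d != 0 by rewrite lt_eqF.
      rewrite /t mulrDr mulrCA mulrDl mul1r.
      move: nz; set A := sv (s i) * ell i x; set B := sv (s i) * ell0 i d => nz.
      by field.
    have := hd x t xs t0 i; rewrite ell_shift => /sv_ge0.
    by rewrite key leNgt hneg.
  move=> /sv_None; have := xs i; rewrite hs => /sv_None ->; rewrite add0r => ->.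
  by rewrite mulr0 normr0.
move=> hd y t ys t0 i; rewrite ell_shift; exact: sv_shift.
Qed.

Lemma ShA_finite : finite_set ShA.
Proof.
apply: (@sub_finite_set _ _ ((fun f : {ffun I -> option bool} => cellA f) @` setT)).
  move=> C [s [-> _]]; exists [ffun i => s i] => //.
  by congr cellA; apply: funext => i; rewrite ffunE.
by apply: finite_image; exact: finite_finset.
Qed.

Lemma ShA_complex : iq_complex ShA.
Proof.
split.
- exact: ShA_finite.
- by move=> C [s [-> ne]]; split=> //; exact: cellA_poly.
- move=> C F [s [-> _]] hf ne; have [t ht] := face_cell hf ne.
  by exists t.
- move=> C D [s [-> _]] [t [-> _]]; split; [exact: inter_face|exact: inter_face2].
Qed.

Lemma ShA_covers : covers ShA.
Proof.
move=> u; pose s i := if ell i u == 0 then None else Some (0 <= ell i u).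
have us : cellA s u.
  move=> i; rewrite /s; case: eqP => [->|_]; first by rewrite mulr0 normr0.
  case: (lerP 0 (ell i u)) => h /=; rewrite ?mul1r ?mulN1r.
    by rewrite ger0_norm.
  by rewrite ltr0_norm.
by exists (cellA s); split=> //; exists s; split=> //; exists u.
Qed.

Definition Hf (u : pt) : R := \sum_i `|ell i u|.

Lemma iqaff_lin (w : I -> int) (u : pt) :
  iqaff (fun v => \sum_i w i * lam i v) (\sum_i (w i)%:~R * a i) u =
  \sum_i (w i)%:~R * ell i u.
Proof.
rewrite /ellA /iqaff.
under [RHS]eq_bigr => i _ do rewrite mulrDr mulr_sumr.
rewrite big_split /= rmorph_sum; congr (_ + _); last first.
  by apply: eq_bigr => i _; rewrite rmorphM /= ratr_int.
rewrite exchange_big /=; apply: eq_bigr => v _; rewrite rmorph_sum mulr_suml.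
by apply: eq_bigr => i _; rewrite rmorphM mulrA.
Qed.

Lemma slopeH s x d r : cellA s x -> rec_cone (cellA s) d -> 0 <= r ->
  Hf (shift x r d) - Hf x = r * \sum_i `|ell0 i d|.
Proof.
move=> xs; rewrite (rec_cellA xs) => hd r0.
rewrite /Hf mulr_sumr -sumrB; apply: eq_bigr => i _.
rewrite ell_shift -(sv_shift r0 (xs i) (hd i)) -(xs i) -(hd i); ring.
Qed.

Lemma ShA_convex : convex_complex ShA.
Proof.
exists Hf; split.
  move=> C D x y d r [s [-> _]] [t [-> _]] xs yt hs ht r0.
  by rewrite (slopeH xs hs r0) (slopeH yt ht r0).
move=> C [s [-> _]].
exists (fun v => \sum_i svz (s i) * lam i v), (\sum_i (svz (s i))%:~R * a i).
have hL : forall x, iqaff (fun v => \sum_i svz (s i) * lam i v)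
     (\sum_i (svz (s i))%:~R * a i) x = \sum_i sv (s i) * ell i x.
  by move=> x; rewrite iqaff_lin; apply: eq_bigr => i _; rewrite sv_svz.
split.
  by move=> x xs; rewrite hL /Hf; apply: eq_bigr => i _; rewrite xs.
move=> E _ _ x _ nxs; rewrite hL /Hf.
have le : \sum_i sv (s i) * ell i x <= \sum_i `|ell i x| by apply: ler_sum => i _; exact: sv_le.
rewrite lt_neqAle le andbT; apply/eqP => heq; apply: nxs => i.
have h0 : \sum_i (`|ell i x| - sv (s i) * ell i x) = 0 by rewrite sumrB heq subrr.
have hnn : forall j, true -> 0 <= `|ell j x| - sv (s j) * ell j x.
  by move=> j _; rewrite subr_ge0 sv_le.
move: (psumr_eq0P hnn h0) => /(_ i isT).
by move/eqP; rewrite subr_eq0 => /eqP.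
Qed.

End Arr4.
Section Double.
Variables (R : realType) (V J : finType) (lamJ : J -> V -> int) (aJ : J -> rat).
Local Notation pt := (V -> R).
Definition lamD (k : J + J) : V -> int := match k with inl j | inr j => lamJ j end.
Definition aD (k : J + J) : rat := match k with inl j => aJ j | inr _ => 0 end.
Local Notation ellD0 := (@ellA R V _ lamD (fun _ => 0)).
Local Notation cellD0 := (@cellA R V _ lamD (fun _ => 0)).
Local Notation ellD := (@ellA R V _ lamD aD).
Local Notation cellD := (@cellA R V _ lamD aD).

Lemma ell_scale (I : finType) (lam : I -> V -> int) (a : I -> rat) i t (u : pt) :
  ellA lam a i (fun v => t * u v) = t * ellA lam (fun _ => 0) i u + ratr (a i).
Proof.
rewrite /ellA /iqaff /= rmorph0 addr0 mulr_sumr; congr (_ + _).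
by apply: eq_bigr => v _; rewrite mulrCA.
Qed.

Lemma cell0_zero (I : finType) (lam : I -> V -> int) s :
  @cellA R V I lam (fun _ => 0) s (fun _ => 0).
Proof.
move=> i; apply: sv_eq0; rewrite /ellA /iqaff /= rmorph0 addr0.
by apply: big1 => v _; rewrite mulr0.
Qed.

Lemma recfan_D : rec_fan (@ShA R V _ lamD aD) = @ShA R V _ lamD (fun _ => 0).
Proof.
apply/seteqP; split=> C.
  move=> [D [s [-> [x xs]]] <-]; exists s; split; first exact: rec_cellA xs.
  by exists (fun _ => 0); rewrite (rec_cellA xs); exact: cell0_zero.
move=> [rho [-> _]].
have hF : cellD0 rho = cellD0 rho `&` [set u | aff (fun _ => 0) 0 u = 0].
  apply/seteqP; split=> u /=.
    move=> hu; split=> //; rewrite /aff big1 ?addr0 // => v _; by rewrite mul0r.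
  by case.
have [d0 [d0r hd0]] := relint hF (ex_intro _ _ (cell0_zero lamD rho)).
pose h j := ellD0 (inl j) d0.
have hr : forall j, ellD0 (inr j) = ellD0 (inl j) by [].
pose s (k : J + J) := match k with
  | inl j => if h j == 0 then (if aJ j == 0 then None else Some (0 < aJ j)) else rho (inl j)
  | inr j => if h j == 0 then None else rho (inr j) end.
have zero_all : forall k u, cellD0 rho u -> ellD0 k d0 = 0 -> ellD0 k u = 0.
  move=> k u hu hk0; apply/eqP; apply: contraT => nz.
  by have := hd0 k (ex_intro _ u (conj hu nz)); rewrite hk0 eqxx.
have eqc : cellD0 s = cellD0 rho.
  apply/seteqP; split=> u hu k.
    case: k => j; case: (eqVneq (h j) 0) => [h0|hn].
    - have := hu (inr j); rewrite /= h0 eqxx => /sv_None u0; exact: sv_eq0.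
    - by have := hu (inl j); rewrite /= (negbTE hn).
    - have := hu (inr j); rewrite /= h0 eqxx => /sv_None u0; exact: sv_eq0.
    - by have := hu (inr j); rewrite /= (negbTE hn).
  case: k => j /=; case: (eqVneq (h j) 0) => [h0|hn].
  - apply: sv_eq0; exact: zero_all hu h0.
  - exact: hu.
  - apply: sv_eq0; exact: zero_all hu h0.
  - exact: hu.
pose S := \sum_j `|ratr (aJ j) : R| / `|h j|.
have S0 : 0 <= S by apply: sumr_ge0 => j _; rewrite divr_ge0.
pose t := 1 + S.
have t0 : 0 <= t by rewrite /t; lra.
pose x : pt := fun v => t * d0 v.
have xs : cellD s x.
  case=> j; rewrite /x ell_scale /= -/(h j).
    case: ifP => [/eqP h0|hn].
      rewrite h0 mulr0 add0r; case: eqP => [->|/eqP an]; first by rewrite rmorph0 mulr0 normr0.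
      have [ha|ha] := ltrP 0 (aJ j).
        by rewrite /= mul1r gtr0_norm // ltr0q.
      by rewrite /= mulN1r ler0_norm // lerq0.
    have nz : h j != 0 by rewrite hn.
    have d0i := d0r (inl j).
    apply: sv_abs; first exact: sv_nz d0i nz.
    rewrite mulrDr mulrCA d0i.
    have q_le : `|ratr (aJ j) : R| / `|h j| <= S.
      rewrite /S (bigD1 j) //= lerDl; apply: sumr_ge0 => i _; rewrite divr_ge0 //.
    have hp : 0 < `|h j| by rewrite normr_gt0.
    have e1 : `|ratr (aJ j) : R| = (`|ratr (aJ j) : R| / `|h j|) * `|h j|.
      by rewrite divfK // normr_eq0.
    have e2 : - `|ratr (aJ j) : R| <= sv (rho (inl j)) * ratr (aJ j).
      have e3 : sv (rho (inl j)) * - (ratr (aJ j) : R) <= `|- (ratr (aJ j) : R)| := sv_le _ _.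
      by move: e3; rewrite mulrN normrN; lra.
    change (0 <= t * `|h j| + sv (rho (inl j)) * ratr (aJ j)).
    move: e1 e2 q_le hp; rewrite /t.
    set Q := _ / _; set A := `|h j|; set B := sv _ * _; set Ra := `|_| => e1 e2 q_le hp.
    have : 0 <= (1 + S - Q) * A by apply: mulr_ge0; lra.
    nra.
  rewrite rmorph0 addr0 /=; case: ifP => [/eqP h0|hn].
    change (sv None * (t * h j) = `|t * h j|); by rewrite h0 mulr0 mulr0 normr0.
  change (sv (rho (inr j)) * (t * ellD0 (inr j) d0) = `|t * ellD0 (inr j) d0|).
  by rewrite mulrCA (d0r (inr j)) normrM (ger0_norm t0).
exists (cellD s); first by exists s; split=> //; exists x.
by rewrite (rec_cellA xs) eqc.
Qed.

End Double.
Section Spec.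
Variables (R : realType) (Vf Vinf : finType) (n : Vf -> nat).
Local Notation V := (Vf + Vinf)%type.
Local Notation pt := (V -> R).
Definition JJ := (Vf + (unit + (Vinf + Vinf * Vinf)))%type.

Definition ind (w v : V) : int := if v == w then 1 else 0.

Definition lamJ (k : JJ) : V -> int :=
  match k with
  | inl p => ind (inl p)
  | inr (inl _) => fun v => match v with inl p => (n p)%:Z | inr _ => 0 end
  | inr (inr (inl i)) => ind (inr i)
  | inr (inr (inr (i, j))) => fun v => ind (inr i) v - ind (inr j) v
  end.
Definition aJ (k : JJ) : rat := match k with inr (inl _) => -1 | _ => 0 end.

Lemma iqaff_ind w (u : pt) g : iqaff (ind w) g u = u w + ratr g.
Proof.
rewrite /iqaff (bigD1 w) //= big1 ?addr0 /ind ?eqxx ?mul1r // => v /negbTE ->.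
by rewrite mulr0z mul0r.
Qed.

Lemma ellJ_p p (u : pt) b : ellA lamJ (fun k => if b then aJ k else 0) (inl p) u = u (inl p).
Proof. by rewrite /ellA /= iqaff_ind; case: b; rewrite /= rmorph0 addr0. Qed.

Lemma ellJ_i i (u : pt) b : ellA lamJ (fun k => if b then aJ k else 0) (inr (inr (inl i))) u = u (inr i).
Proof. by rewrite /ellA /= iqaff_ind; case: b; rewrite /= rmorph0 addr0. Qed.

Lemma ellJ_ij i j (u : pt) b :
  ellA lamJ (fun k => if b then aJ k else 0) (inr (inr (inr (i, j)))) u = u (inr i) - u (inr j).
Proof.
have -> : ellA lamJ (fun k => if b then aJ k else 0) (inr (inr (inr (i, j)))) u =
   iqaff (ind (inr i)) 0 u - iqaff (ind (inr j)) 0 u.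
  rewrite /ellA /iqaff /=; case: b; rewrite /= rmorph0 !addr0 -sumrB;
  by apply: eq_bigr => v _; rewrite intrB mulrBl.
by rewrite !iqaff_ind rmorph0 !addr0.
Qed.

Lemma ellJ_u (u : pt) b :
  ellA lamJ (fun k => if b then aJ k else 0) (inr (inl tt)) u =
  \sum_p (n p)%:R * u (inl p) - (if b then 1 else 0).
Proof.
rewrite /ellA /iqaff /= big_sumType /=.
rewrite [X in _ + X + _]big1; last by move=> i _; rewrite mulr0z mul0r.
rewrite addr0.
case: b; rewrite /= ?rmorphN ?rmorph1 ?rmorph0 ?subr0 ?addr0. all: reflexivity.
Qed.

End Spec.
Section Chain.
Variables (Vinf : finType) (c : seq {set Vinf}).
Hypothesis hc : is_chain c.

Definition fnd (i : Vinf) : nat := find (fun S : {set Vinf} => i \in S) c.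

Lemma fnd_le i : (fnd i <= size c)%N.
Proof. exact: find_size. Qed.

Lemma chain_proper a b : (a < b)%N -> (b < size c)%N ->
  nth (@finset.set0 Vinf) c a \proper nth (@finset.set0 Vinf) c b.
Proof.
move=> ab bs; move: hc => /andP [hs _].
have tr : transitive (fun S1 S2 : {set Vinf} => S1 \proper S2).
  by move=> y x z; exact: proper_trans.
apply: (sorted_ltn_nth tr (@finset.set0 Vinf) hs) => //; rewrite inE //.
exact: ltn_trans ab bs.
Qed.

Lemma mem_chain k i : (k < size c)%N -> (i \in nth (@finset.set0 Vinf) c k) = (fnd i <= k)%N.
Proof.
move=> ks; apply/idP/idP => h.
  rewrite leqNgt; apply/negP => lt.
  by have := before_find (@finset.set0 Vinf) lt; rewrite h.
have hf : (fnd i < size c)%N by exact: leq_ltn_trans h ks.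
have hin : i \in nth (@finset.set0 Vinf) c (fnd i).
  by apply: (nth_find (@finset.set0 Vinf) (a := fun S : {set Vinf} => i \in S)); rewrite has_find.
move: h; rewrite leq_eqVlt => /orP [/eqP <- //|lt].
have := chain_proper lt ks => /proper_sub /fintype.subsetP; exact.
Qed.

Lemma chain_rep k : (k < size c)%N -> exists r, fnd r = k.
Proof.
move=> ks; move: hc => /andP [_ hall].
have ne : nth (@finset.set0 Vinf) c k != (@finset.set0 Vinf) by exact: (all_nthP (@finset.set0 Vinf) hall).
case: k ks ne => [|k] ks ne.
  have [r hr] := finset.set0Pn _ ne; exists r.
  by apply/eqP; rewrite -leqn0 -mem_chain.
have := chain_proper (ltnSn k) ks => /fintype.properP [_ [r hr hnr]].
exists r; apply/eqP; rewrite eqn_leq -mem_chain // hr /=.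
by rewrite ltnNge -mem_chain ?hnr // (ltn_trans _ ks).
Qed.

End Chain.
Lemma boolR {R : realType} (b : bool) : (b%:R : R) = if b then 1 else 0.
Proof. by case: b. Qed.

Section SigmaChar.
Variables (R : realType) (Vf Vinf : finType) (n : Vf -> nat).
Hypothesis hn : forall p, (0 < n p)%N.
Variables (A : {set Vf}) (c : seq {set Vinf}).
Hypothesis hc : is_chain c.
Local Notation pt := (Vf + Vinf -> R).

Definition sconds (u : pt) : Prop :=
 [/\ (forall p, p \notin A -> u (inl p) = 0), (forall p, 0 <= u (inl p)),
     \sum_p (n p)%:R * u (inl p) = 1,
     (forall i, fnd c i = size c -> u (inr i) = 0) /\ (forall i, 0 <= u (inr i)) &
     (forall i j, fnd c i = fnd c j -> u (inr i) = u (inr j)) /\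
     (forall i j, (fnd c i < fnd c j)%N -> u (inr j) <= u (inr i))].

Lemma nR0 p : ((n p)%:R : R) != 0.
Proof. by rewrite pnatr_eq0 -lt0n hn. Qed.

Lemma telesc (g : nat -> R) f : (f <= size c)%N -> g (size c) = 0 ->
  \sum_(j < size c) (g j - g j.+1) * ((f <= j)%N)%:R = g f.
Proof.
move=> hf gl.
rewrite -(big_mkord xpredT (fun j => (g j - g j.+1) * ((f <= j)%N)%:R)).
rewrite (big_cat_nat (leq0n f) hf) /=.
rewrite big_nat_cond big1 ?add0r; last first.
  by move=> j /andP [/andP [_ hj] _]; rewrite leqNgt hj mulr0.
under eq_big_nat => j /andP [hj _] do rewrite hj mulr1.
have := telescope_sumr g hf; rewrite gl => e.
rewrite -[RHS]opprK -[- g f]add0r -e -sumrN; apply: eq_bigr => j _; ring.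
Qed.

Lemma sigma_sconds (u : pt) : @sigma_cell R Vf Vinf n A c u <-> sconds u.
Proof.
split.
  move=> [lv [mu [l0 lA [ls mu0] hp hi]]].
  have hi' : forall i, u (inr i) = \sum_(j < size c) mu j * ((fnd c i <= j)%N)%:R.
    by move=> i; rewrite hi; apply: eq_bigr => j _; rewrite mem_chain.
  split.
  - by move=> p hpA; rewrite hp lA // mul0r.
  - by move=> p; rewrite hp divr_ge0.
  - rewrite -[RHS]ls; apply: eq_bigr => p _; rewrite hp mulrCA mulfV ?mulr1 //; exact: nR0.
  - split.
      move=> i hi0; rewrite hi' big1 // => j _.
      by rewrite hi0 leqNgt ltn_ord mulr0.
    by move=> i; rewrite hi'; apply: sumr_ge0 => j _; rewrite mulr_ge0 ?ler0n.
  - split; first by move=> i j e; rewrite !hi' e.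
    move=> i j lt; rewrite !hi'; apply: ler_sum => k _; rewrite ler_wpM2l //.
    rewrite !boolR; case: ifP => h1; case: ifP => h2 //.
    by move: h2; rewrite (leq_trans (ltnW lt) h1).
move=> [uA u0 us [ul u0'] [ueq ult]].
have reps : forall k : 'I_(size c), exists r, fnd c r = k.
  by move=> k; apply: chain_rep.
have [rr hrr] := choice reps.
pose g (k : nat) : R := if (insub k : option 'I_(size c)) is Some o then u (inr (rr o)) else 0.
have gP1 : forall k, (k < size c)%N -> exists r, fnd c r = k /\ g k = u (inr r).
  move=> k hk; exists (rr (Ordinal hk)); split; first by rewrite hrr.
  rewrite /g insubT /=; do 3 f_equal; exact: val_inj.
have gP2 : forall k, (size c <= k)%N -> g k = 0.
  by move=> k hk; rewrite /g insubF // ltnNge hk.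
exists (fun p => (n p)%:R * u (inl p)), (fun j => g j - g j.+1); split.
- by move=> p; rewrite mulr_ge0 ?ler0n.
- by move=> p hp; rewrite uA // mulr0.
- split=> // j; rewrite subr_ge0.
  have [r1 [f1 ->]] := gP1 j (ltn_ord j).
  case: (ltnP j.+1 (size c)) => hj.
    have [r2 [f2 ->]] := gP1 _ hj; apply: ult; by rewrite f1 f2.
  by rewrite gP2.
- by move=> p; rewrite mulrC mulKf //; exact: nR0.
- move=> i.
  under eq_bigr => j _ do rewrite mem_chain //.
  rewrite telesc; [|exact: fnd_le|exact: gP2].
  case: (ltnP (fnd c i) (size c)) => hi.
    have [r [fr ->]] := gP1 _ hi; apply: ueq; by rewrite fr.
  have e : fnd c i = size c by apply/eqP; rewrite eqn_leq fnd_le hi.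
  by rewrite ul // gP2 // e.
Qed.

End SigmaChar.
Section CellSigma.
Variables (R : realType) (Vf Vinf : finType) (n : Vf -> nat).
Variables (A : {set Vf}) (c : seq {set Vinf}).
Local Notation pt := (Vf + Vinf -> R).

Definition sgJ (k : JJ Vf Vinf) : option bool :=
  match k with
  | inl p => if p \in A then Some true else None
  | inr (inl _) => None
  | inr (inr (inl i)) => if (fnd c i < size c)%N then Some true else None
  | inr (inr (inr (i, j))) => if fnd c i == fnd c j then None else Some (fnd c i < fnd c j)%N
  end.

Definition sgD (k : JJ Vf Vinf + JJ Vf Vinf) : option bool :=
  match k with
  | inl k' => sgJ k'
  | inr (inr (inl _)) => Some true
  | inr k' => sgJ k'
  end.

Lemma sv_pos (r : R) : 0 <= r -> sv (Some true) * r = `|r|.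
Proof. by move=> h; rewrite /= mul1r ger0_norm. Qed.

Lemma condJ (u : pt) b k : sconds n A c u -> k != inr (inl tt) ->
  sv (sgJ k) * ellA (lamJ n) (fun k => if b then aJ k else 0) k u =
  `|ellA (lamJ n) (fun k => if b then aJ k else 0) k u|.
Proof.
move=> [uA u0 us [ul u0'] [ueq ult]].
case: k => [p|k] hk; last case: k hk => [[]|k] hk; last case: k hk => [i|[i j]] hk.
- rewrite ellJ_p /=; case: ifP => hp; first exact: sv_pos.
  by apply: sv_eq0; rewrite uA ?hp.
- by rewrite eqxx in hk.
- rewrite ellJ_i /=; case: ifP => hi; first exact: sv_pos.
  apply: sv_eq0; apply: ul; apply/eqP; rewrite eqn_leq fnd_le leqNgt hi //.
- rewrite ellJ_ij /=; case: eqP => [e|/eqP ne].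
    by apply: sv_eq0; rewrite (ueq _ _ e) subrr.
  case: (ltnP (fnd c i) (fnd c j)) => lt.
    by apply: sv_pos; rewrite subr_ge0 ult.
  have lt' : (fnd c j < fnd c i)%N by rewrite ltn_neqAle eq_sym ne lt.
  have := ult _ _ lt'; rewrite /= mulN1r => h.
  by rewrite ler0_norm ?subr_le0.
Qed.

Lemma cell_sconds (u : pt) :
  @cellA R _ _ (lamD (lamJ n)) (aD (@aJ Vf Vinf)) sgD u <-> sconds n A c u.
Proof.
split=> [hcell|hs].
  have hL : forall k, sv (sgJ k) * ellA (lamJ n) (fun k => if true then aJ k else 0) k u =
      `|ellA (lamJ n) (fun k => if true then aJ k else 0) k u| := fun k => hcell (inl k).
  split.
  - move=> p hp; have := hL (inl p); rewrite (ellJ_p _ _ _ true) /= (negbTE hp); exact: sv_None.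
  - move=> p; have := hL (inl p); rewrite (ellJ_p _ _ _ true) /=; case: ifP => _.
      by rewrite mul1r => ->.
    by move/sv_None ->.
  - have := hL (inr (inl tt)); rewrite (ellJ_u _ _ true) /= => /sv_None /eqP; rewrite subr_eq0 => /eqP.
    by [].
  - split.
      move=> i hi; have := hL (inr (inr (inl i))); rewrite (ellJ_i _ _ _ true) /= hi ltnn.
      exact: sv_None.
    move=> i; have := hL (inr (inr (inl i))); rewrite (ellJ_i _ _ _ true) /=; case: ifP => _.
      by rewrite mul1r => ->.
    by move/sv_None ->.
  - split.
      move=> i j e; have := hL (inr (inr (inr (i, j)))); rewrite (ellJ_ij _ _ _ _ true) /= e eqxx.
      by move/sv_None/eqP; rewrite subr_eq0 => /eqP.
    move=> i j lt; have := hL (inr (inr (inr (i, j)))); rewrite (ellJ_ij _ _ _ _ true) /= lt.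
    rewrite (ltn_eqF lt) mul1r => h; rewrite -subr_ge0 h //.
case=> k.
  case: (eqVneq k (inr (inl tt))) => [->|ne].
    case: hs => _ _ us _ _.
    apply: sv_eq0; change (ellA (lamJ n) (fun k => if true then aJ k else 0) (inr (inl tt)) u = 0).
    by rewrite (ellJ_u _ _ true) us subrr.
  change (sv (sgJ k) * ellA (lamJ n) (fun k => if true then aJ k else 0) k u =
    `|ellA (lamJ n) (fun k => if true then aJ k else 0) k u|).
  exact: (condJ true hs ne).
case: (eqVneq k (inr (inl tt))) => [->|ne].
  case: hs => _ _ us _ _.
  change (sv (Some true) * ellA (lamJ n) (fun k => if false then aJ k else 0) (inr (inl tt)) u =
     `|ellA (lamJ n) (fun k => if false then aJ k else 0) (inr (inl tt)) u|).
  by rewrite (ellJ_u _ _ false) us subr0 sv_pos ?ler01.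
have -> : sgD (inr k) = sgJ k by case: k ne => [p|[[]|[i|[i j]]]].
change (sv (sgJ k) * ellA (lamJ n) (fun k => if false then aJ k else 0) k u =
  `|ellA (lamJ n) (fun k => if false then aJ k else 0) k u|).
exact: (condJ false hs ne).
Qed.

End CellSigma.
Lemma cellA0_cone (R : realType) (V I : finType) (lam : I -> V -> int) s :
  iq_cone (@cellA R V I lam (fun _ => 0) s).
Proof.
exists #|{: I * bool}|, (rowM lam s); rewrite cellA_rows.
apply/seteqP; split=> u h j; have := h j; by rewrite /rowG mulr0.
Qed.

Theorem proposition5p2 (R : realType) (Vf Vinf : finType) (n : Vf -> nat)
    (Sigma : set (set (Vf + Vinf -> R))) :
  (forall p, (0 < n p)%N) ->
  iq_complex Sigma ->
  (forall s, Sigma s -> exists (A : {set Vf}) (c : seq {set Vinf}),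
        is_chain c /\ s = @sigma_cell R Vf Vinf n A c) ->
  exists Sh : set (set (Vf + Vinf -> R)),
    [/\ iq_complex Sh /\ covers Sh, Sigma `<=` Sh,
        iq_fan (rec_fan Sh) /\ covers (rec_fan Sh),
        rec_fan Sigma `<=` rec_fan Sh &
        convex_complex Sh /\ convex_complex (rec_fan Sh)].
Proof.
move=> hn hSigma hcells.
exists (@ShA R _ _ (lamD (lamJ n)) (aD (@aJ Vf Vinf))).
have sub : Sigma `<=` @ShA R _ _ (lamD (lamJ n)) (aD (@aJ Vf Vinf)).
  move=> s hs; have [A [c [hc e]]] := hcells s hs.
  case: hSigma => _ hne _ _; have [_ ne] := hne s hs.
  exists (sgD A c); split=> //; rewrite e.
  apply/seteqP; split=> u.
    by move/(sigma_sconds hn A hc)/(cell_sconds _ _ _ _).2.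
  by move/(cell_sconds _ _ _ _).1/(sigma_sconds hn A hc).
rewrite (recfan_D R (lamJ n) (@aJ Vf Vinf)); split.
- split; [exact: ShA_complex | exact: ShA_covers].
- exact: sub.
- split; last exact: ShA_covers.
  split; first exact: ShA_complex.
  by move=> C [s [-> _]]; exact: cellA0_cone.
- rewrite -(recfan_D R (lamJ n) (@aJ Vf Vinf)) => C [s hs <-]; exists s => //; exact: sub.
- split; exact: ShA_convex.
Qed.
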